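(* Let $d\ge2$, $\bm\alpha=(\alpha_1,\dots,\alpha_d)\in(0,1)^d$, and let $C^{\mathrm{MO}}_{\bm\alpha}(\bm u)=\left(\prod_{j=1}^d u_j^{1-\alpha_j}\right)\min_{1\le j\le d}\{u_j^{\alpha_j}\}$, $\bm u\in[0,1]^d$, be the Marshall--Olkin copula, with survival copula $\hat C^{\mathrm{MO}}_{\bm\alpha}$. Then: (i) $\hat C^{\mathrm{MO}}_{\bm\alpha}$ admits the tail copula $\Lambda(\bm x;\hat C^{\mathrm{MO}}_{\bm\alpha})=\min_{1\le j\le d}\{\alpha_jx_j\}$, $\bm x\in(0,\infty)^d$. (ii) $\lambda^\ast(\hat C^{\mathrm{MO}}_{\bm\alpha})=\prod_{j=1}^d\alpha_j^{1/d}$. (iii) The maximizer of $\bm b\mapsto\Lambda(\bm b;\hat C^{\mathrm{MO}}_{\bm\alpha})$ over $\mathcal B$ is unique and equals $\bm b^\ast=\left(\frac{\prod_{j=1}^d\alpha_j^{1/d}}{\alpha_1},\dots,\frac{\prod_{j=1}^d\alpha_j^{1/d}}{\alpha_d}\right)\in\mathcal B$.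
   Context: For a $d$-dimensional copula $C$ and $\bm U\sim C$, the survival copula $\hat C$ is the distribution function of $(1-U_1,\dots,1-U_d)$. The (lower) tail copula of a copula $C$ is $\Lambda(\bm x;C)=\lim_{t\downarrow0}C(t\bm x)/t$, $\bm x\in(0,\infty)^d$, when the limit exists. Let $\mathcal B=\{\bm b\in(0,\infty)^d:\prod_{j=1}^d b_j=1\}$ and define the maximal tail concordance measure $\lambda^\ast(C)=\sup_{\bm b\in\mathcal B}\Lambda(\bm b;C)$. *)

(* Defs.v *)
From HB Require Import structures.
From mathcomp Require Import all_boot all_order all_algebra.
From mathcomp Require Import all_classical all_reals all_analysis.
Set Implicit Arguments. Unset Strict Implicit. Unset Printing Implicit Defensive.
Import Order.TTheory GRing.Theory Num.Theory.
Import numFieldNormedType.Exports.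
Local Open Scope classical_set_scope.
Local Open Scope ring_scope.

Section Defs.
Variable R : realType.
Variable d : nat.

(* minimum of f over j in {0,..,d-1} (meaningful for d >= 1) *)
Definition minI (f : 'I_d -> R) : R :=
  \big[Num.min/head 0 [seq f j | j <- enum 'I_d]]_(j < d) f j.

Definition MO_copula (alpha u : 'I_d -> R) : R :=
  (\prod_(j < d) (u j `^ (1 - alpha j))) * minI (fun j => u j `^ alpha j).

Definition has_cdf (dT : measure_display) (T : measurableType dT)
  (P : probability T R) (U : 'I_d -> T -> R) (C : ('I_d -> R) -> R) : Prop :=
  (forall j, measurable_fun setT (U j)) /\
  forall u : 'I_d -> R, (forall j, 0 <= u j <= 1) ->
    P [set w | forall j, U j w <= u j] = (C u)%:E.

Definition survival_cdf (dT : measure_display) (T : measurableType dT)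
  (P : probability T R) (U : 'I_d -> T -> R) : ('I_d -> R) -> R :=
  fun u => fine (P [set w | forall j, 1 - U j w <= u j]).

Definition tail_copula (C : ('I_d -> R) -> R) (x : 'I_d -> R) : R :=
  lim ((fun t : R => C (fun j => t * x j) / t) @ 0^'+).

Definition has_tail_copula (C : ('I_d -> R) -> R) (L : ('I_d -> R) -> R) : Prop :=
  forall x : 'I_d -> R, (forall j, 0 < x j) ->
    (fun t : R => C (fun j => t * x j) / t) @ 0^'+ --> L x.

Definition Bset : set ('I_d -> R) :=
  [set b | (forall j, 0 < b j) /\ \prod_(j < d) b j = 1].

Definition lambda_star (C : ('I_d -> R) -> R) : R :=
  sup [set tail_copula C b | b in Bset].

End Defs.

(* Main.v *)
Require Import Defs.
From HB Require Import structures.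
From mathcomp Require Import all_boot all_order all_algebra.
From mathcomp Require Import all_classical all_reals all_analysis.
From mathcomp Require Import lra.
Import Order.TTheory GRing.Theory Num.Theory.
Import numFieldNormedType.Exports.
Local Open Scope classical_set_scope.
Local Open Scope ring_scope.
Set Implicit Arguments. Unset Strict Implicit. Unset Printing Implicit Defensive.
Section MinI.
Variable R : realType.
Variable d : nat.
Implicit Types f : 'I_d -> R.

Lemma minI_le f j : minI f <= f j.
Proof. exact: bigmin_le. Qed.

Lemma minI_attained f : (0 < d)%N -> exists j, minI f = f j.
Proof.
move=> d0; rewrite /minI.
have [j0 Hj0] : exists j0, head 0 [seq f j | j <- enum 'I_d] = f j0.
  case E: (enum 'I_d) => [|j0 s].
    by move: (size_enum_ord d); rewrite E /= => E0; rewrite -E0 in d0.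
  by exists j0.
rewrite Hj0.
apply: (big_ind (fun v => exists j, v = f j)); first by exists j0.
  move=> x y [i ->] [k ->]; case: (leP (f i) (f k)) => _.
    by exists i. by exists k.
by move=> i _; exists i.
Qed.

Lemma minI_unique f m : (0 < d)%N -> (forall j, m <= f j) -> (exists j, f j = m) ->
  minI f = m.
Proof.
move=> d0 H [j Hj]; apply/eqP; rewrite eq_le; apply/andP; split.
  by rewrite -Hj minI_le.
by have [k ->] := minI_attained f d0; exact: H.
Qed.

Lemma minI_ge f m : (0 < d)%N -> (m <= minI f) = [forall j, m <= f j].
Proof.
move=> d0; apply/idP/forallP => [H j|H].
  exact: le_trans H (minI_le f j).
by have [k ->] := minI_attained f d0.
Qed.
End MinI.

Section Subsets.
Variable R : realType.
Variable T : finType.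

Lemma sum_subset_split (F : {set T} -> R) (S : {set T}) k : k \in S ->
  \sum_(A : {set T} | A \subset S) F A =
  \sum_(A : {set T} | A \subset S :\ k) F A + \sum_(A : {set T} | A \subset S :\ k) F (k |: A).
Proof.
move=> kS.
rewrite [LHS](bigID (fun A : {set T} => k \in A)) /= addrC; congr (_ + _).
  apply: eq_bigl => A; rewrite subsetD1 andbC.
  by case: (k \in A).
rewrite (reindex_onto (fun B => k |: B) (fun A => A :\ k)); last first.
  by move=> A /andP [_ kA]; rewrite finset.setD1K.
apply: eq_bigl => B; rewrite finset.setU11 andbT finset.subUset finset.sub1set kS /=.
rewrite finset.subsetD1.
case kB: (k \in B); last by rewrite finset.setU1K ?kB // eqxx andbT.
rewrite andbF; apply/negbTE/negP => /andP [_ /eqP E]; move: kB; rewrite -E !inE eqxx.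
by [].
Qed.
End Subsets.
Section Subsets2.
Variable R : realType.
Variable T : finType.

Lemma sum_sign_split (G : {set T} -> R) (S : {set T}) k : k \in S ->
  \sum_(A : {set T} | A \subset S) (-1) ^+ #|A| * G A =
  \sum_(A : {set T} | A \subset S :\ k) (-1) ^+ #|A| * (G A - G (k |: A)).
Proof.
move=> kS; rewrite (sum_subset_split _ kS) -big_split /=.
apply: eq_bigr => A; rewrite finset.subsetD1 => /andP [_ kA].
by rewrite finset.cardsU1 kA exprS mulrBr mulN1r mulNr.
Qed.

Lemma sum_sign_cancel (G : {set T} -> R) (S : {set T}) k : k \in S ->
  (forall A : {set T}, A \subset S :\ k -> G (k |: A) = G A) ->
  \sum_(A : {set T} | A \subset S) (-1) ^+ #|A| * G A = 0.
Proof.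
move=> kS HG; rewrite (sum_sign_split _ kS); apply: big1 => A HA.
by rewrite HG // subrr mulr0.
Qed.
Lemma sum_allT (F : {set T} -> R) :
  \sum_(A : {set T}) F A = \sum_(A : {set T} | A \subset [set: T]%SET) F A.
Proof. by apply: eq_bigl => A; rewrite finset.subsetT. Qed.
End Subsets2.

Section Comb.
Variable R : realType.
Variable d : nat.

Lemma sum_sign0 : (0 < d)%N ->
  \sum_(A : {set 'I_d}) (-1) ^+ #|A| = 0 :> R.
Proof.
case: d => [//|n] _.
rewrite -[RHS](@sum_sign_cancel R _ (fun _ => 1) [set: 'I_n.+1]%SET ord0 (finset.in_setT _) (fun _ _ => erefl)).
by rewrite sum_allT; apply: eq_bigr => A _; rewrite mulr1.
Qed.

Lemma sum_sign_lin (a : 'I_d -> R) : (1 < d)%N ->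
  \sum_(A : {set 'I_d}) (-1) ^+ #|A| * (\sum_j (if j \in A then a j else 0)) = 0.
Proof.
move=> d1.
under eq_bigr do rewrite mulr_sumr.
rewrite exchange_big /=; apply: big1 => j _.
have [k kj] : exists k : 'I_d, k != j.
  case: (j =P Ordinal d1) => [->|/eqP H]; last by exists (Ordinal d1); rewrite eq_sym.
  have d0 : (0 < d)%N by apply: leq_trans d1.
  by exists (Ordinal d0).
rewrite sum_allT (@sum_sign_cancel R _ (fun A => if j \in A then a j else 0) [set: 'I_d]%SET k (finset.in_setT _)) //.
move=> A _; by rewrite !inE eq_sym (negbTE kj).
Qed.

Lemma sum_sign_minI (y : 'I_d -> R) : (0 < d)%N -> (forall j, 0 < y j) ->
  \sum_(A : {set 'I_d}) (-1) ^+ #|A| * minI (fun j => if j \in A then - y j else 0)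
  = minI y.
Proof.
move=> d0 y0; have [k0 Hk0] := minI_attained y d0.
rewrite Hk0.
rewrite sum_allT (@sum_sign_split R _ (fun A => minI (fun j => if j \in A then - y j else 0)) [set: 'I_d]%SET k0 (finset.in_setT _)).
rewrite (bigD1 finset.set0) ?finset.sub0set //= big1 ?addr0; last first.
  move=> A /andP [HA A0].
  set f := (fun j => _).
  suff -> : minI (fun j => if j \in k0 |: A then - y j else 0) = minI f by rewrite subrr mulr0.
  have [j jA] : exists j, j \in A.
    by apply/finset.set0Pn.
  have jk0 : j != k0 by move: (fintype.subsetP HA j jA); rewrite !inE => /andP [].
  have Hm : minI f <= - y k0.
    apply: le_trans (minI_le f j) _; rewrite /f jA lerN2.
    by rewrite -Hk0 minI_le.
  apply: minI_unique => //.
    move=> i; rewrite !inE; case: (i =P k0) => [->|_] /=; first exact: Hm.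
    exact: minI_le.
  have [i Hi] := minI_attained f d0.
  exists i; rewrite Hi /f !inE; case: (i =P k0) => [Eik|//] /=.
  have k0A : k0 \notin A by apply/negP => /(fintype.subsetP HA); rewrite !inE eqxx.
  move: Hm; rewrite Hi /f Eik (negbTE k0A) oppr_ge0 => H.
  by move: (y0 k0); rewrite ltNge H.
rewrite cards0 expr0 mul1r.
have -> : minI (fun j : 'I_d => if j \in finset.set0 then - y j else 0) = 0.
  apply: minI_unique => //; first by move=> j; rewrite inE.
  by exists k0; rewrite inE.
have -> : minI (fun j : 'I_d => if j \in k0 |: finset.set0 then - y j else 0) = - y k0.
  apply: minI_unique => //; last by exists k0; rewrite !inE eqxx.
  move=> j; rewrite !inE; case: (j =P k0) => [->//|_] /=.
  by rewrite oppr_le0 ltW.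
by rewrite sub0r opprK.
Qed.
End Comb.
Section Lim.
Variable R : realType.
Lemma right_of_dnbhs (f : R -> R) (l : R) : f x @[x --> (0:R)^'] --> l -> f x @[x --> (0:R)^'+] --> l.
Proof.
move=> H A /H; rewrite !near_simpl !near_withinE; apply: filterS => x Px x0.
by apply: Px; rewrite gt_eqF.
Qed.

Lemma g_der (x : R) : is_derive (0:R) 1 (fun t : R => 1 - t * x) (- x).
Proof.
apply: is_derive_eq.
by rewrite add0r mul1r scaler0 add0r [_%:A]mulr1.
Qed.

Lemma pow_quot (b x : R) :
  (fun t => ((1 - t * x) `^ b - 1) / t) @ (0:R)^'+ --> - (b * x).
Proof.
have H : is_derive (0:R) 1 ((fun y : R => y `^ b) \o (fun t : R => 1 - t * x)) (b * (1 - 0 * x) `^ (b - 1) * - x).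
  apply: is_derive1_comp; last exact: g_der.
  by apply: is_derive1_powR; rewrite mul0r subr0 ltr01.
have [_ Hv] := H.
have := @ex_derive _ _ _ _ _ _ _ H.
rewrite /derivable => /cvg_ex [l Hl].
have El : l = b * (1 - 0 * x) `^ (b - 1) * - x.
  rewrite -Hv /derive. by rewrite (cvg_lim _ Hl).
move: Hl; rewrite El mul0r subr0 powR1 /= mulr1 => Hl.
apply: right_of_dnbhs.
move: Hl; rewrite mulrN -mulNr.
rewrite (@eq_cvg _ _ _ _ (fun h => ((1 - h * x) `^ b - 1) / h)) // => h.
rewrite addr0 mul0r subr0 powR1 /= [h%:A]mulr1 [RHS]mulrC.
by [].
Qed.
End Lim.
Section Lim2.
Variable R : realType.
Local Notation "'Rp'" := ((0:R)^'+).

Lemma id_right : (fun t : R => t) @ Rp --> (0:R).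
Proof. exact: cvg_at_right_filter cvg_id. Qed.

Lemma quot_to1 (g : R -> R) (b : R) : (fun t => (g t - 1) / t) @ Rp --> b ->
  g @ Rp --> (1:R).
Proof.
move=> Hg.
have : (fun t => 1 + t * ((g t - 1) / t)) @ Rp --> 1 + 0 * b.
  apply: cvgD; first exact: cvg_cst.
  apply: cvgM => //; exact: id_right.
rewrite mul0r addr0. apply: cvg_trans. apply: near_eq_cvg.
near=> t.
have t0 : 0 < t by near: t; exact: nbhs_right_gt.
by rewrite mulrCA divff ?gt_eqF // mulr1 addrC subrK.
Unshelve. all: by end_near.
Qed.
Lemma quot_mul (f g : R -> R) (a b : R) :
  (fun t => (f t - 1) / t) @ Rp --> a ->
  (fun t => (g t - 1) / t) @ Rp --> b ->
  (fun t => (f t * g t - 1) / t) @ Rp --> a + b.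
Proof.
move=> Hf Hg.
have -> : (fun t => (f t * g t - 1) / t) = (fun t => (f t - 1) / t * g t + (g t - 1) / t).
  apply/funext => t; rewrite mulrAC -mulrDl; congr (_ / _).
  by rewrite mulrBl mul1r addrA subrK.
rewrite -[a]mulr1; apply: cvgD => //; apply: cvgM => //.
exact: quot_to1 Hg.
Qed.

Lemma quot_prod (I : Type) (r : seq I) (F : I -> R -> R) (a : I -> R) :
  (forall i, (fun t => (F i t - 1) / t) @ Rp --> a i) ->
  (fun t => (\prod_(i <- r) F i t - 1) / t) @ Rp --> \sum_(i <- r) a i.
Proof.
move=> HF; elim: r => [|i r IH].
  rewrite big_nil; under eq_fun do rewrite big_nil subrr mul0r.
  exact: cvg_cst.
rewrite big_cons; under eq_fun do rewrite big_cons.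
exact: quot_mul.
Qed.

Lemma cvg_bigsum (I : Type) (r : seq I) (F : I -> R -> R) (a : I -> R) :
  (forall i, F i @ Rp --> a i) ->
  (fun t => \sum_(i <- r) F i t) @ Rp --> \sum_(i <- r) a i.
Proof.
move=> HF; elim: r => [|i r IH].
  rewrite big_nil; under eq_fun do rewrite big_nil.
  exact: cvg_cst.
rewrite big_cons; under eq_fun do rewrite big_cons.
exact: cvgD.
Qed.

Lemma cvg_min2 (u v : R -> R) (a b : R) : u @ Rp --> a -> v @ Rp --> b ->
  (fun t => Num.min (u t) (v t)) @ Rp --> Num.min a b.
Proof.
move=> Hu Hv; rewrite minr_absE; under eq_fun do rewrite minr_absE.
apply: cvgM; last exact: cvg_cst.
apply: cvgB; first exact: cvgD.
apply: cvg_norm; exact: cvgB.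
Qed.

Lemma cvg_bigmin (I : Type) (r : seq I) (F : I -> R -> R) (x : R -> R) (a : I -> R) (ax : R) :
  x @ Rp --> ax -> (forall i, F i @ Rp --> a i) ->
  (fun t => \big[Num.min/x t]_(i <- r) F i t) @ Rp --> \big[Num.min/ax]_(i <- r) a i.
Proof.
move=> Hx HF; elim: r => [|i r IH].
  by rewrite big_nil; under eq_fun do rewrite big_nil.
rewrite big_cons; under eq_fun do rewrite big_cons.
exact: cvg_min2.
Qed.

Lemma cvg_minI d (F : 'I_d -> R -> R) (a : 'I_d -> R) : (0 < d)%N ->
  (forall j, F j @ Rp --> a j) ->
  (fun t => minI (fun j => F j t)) @ Rp --> minI a.
Proof.
case: d F a => [//|n] F a _ HF.
rewrite /minI enum_ordSl /=.
exact: cvg_bigmin.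
Qed.
End Lim2.
Section Asym.
Variable R : realType.
Variable d : nat.
Variable alpha : 'I_d -> R.
Variable x : 'I_d -> R.
Local Notation "'Rp'" := ((0:R)^'+).

Definition uT (t : R) (A : {set 'I_d}) : 'I_d -> R :=
  fun j => if j \in A then 1 - t * x j else 1.

Lemma minI_affine (f : 'I_d -> R) (c t : R) : (0 < d)%N -> 0 < t ->
  (minI f - c) / t = minI (fun j => (f j - c) / t).
Proof.
move=> d0 t0; apply/esym/minI_unique => //.
  move=> j; rewrite ler_pM2r ?invr_gt0 // lerD2r; exact: minI_le.
by have [j ->] := minI_attained f d0; exists j.
Qed.

Lemma pow_quotT (A : {set 'I_d}) (b : R) j :
  (fun t => (uT t A j `^ b - 1) / t) @ Rp --> (if j \in A then - (b * x j) else 0).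
Proof.
rewrite /uT; case: (j \in A); first exact: pow_quot.
have -> : (fun t : R => ((1:R) `^ b - 1) / t) = fun=> 0.
  by apply/funext => t; rewrite powR1 /= subrr mul0r.
exact: cvg_cst.
Qed.

Lemma quot_MO (A : {set 'I_d}) : (0 < d)%N ->
  (fun t => (MO_copula alpha (uT t A) - 1) / t) @ Rp -->
  \sum_(j < d) (if j \in A then - ((1 - alpha j) * x j) else 0) +
  minI (fun j => if j \in A then - (alpha j * x j) else 0).
Proof.
move=> d0; rewrite /MO_copula; apply: quot_mul.
  by apply: quot_prod => j; apply: pow_quotT.
apply: cvg_trans; last first.
  apply: (@cvg_minI _ d (fun j t => (uT t A j `^ alpha j - 1) / t)) => // j.
  exact: pow_quotT.
apply: near_eq_cvg; near=> t.
have t0 : 0 < t by near: t; exact: nbhs_right_gt.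
by rewrite minI_affine.
Unshelve. all: by end_near.
Qed.

Lemma quot_sum : (1 < d)%N -> (forall j, 0 < alpha j) -> (forall j, 0 < x j) ->
  (fun t => (\sum_(A : {set 'I_d}) (-1) ^+ #|A| * MO_copula alpha (uT t A)) / t)
    @ Rp --> minI (fun j => alpha j * x j).
Proof.
move=> d1 a0 x0.
have d0 : (0 < d)%N by apply: leq_trans d1.
have -> : (fun t => (\sum_(A : {set 'I_d}) (-1) ^+ #|A| * MO_copula alpha (uT t A)) / t)
  = (fun t => \sum_(A : {set 'I_d}) (-1) ^+ #|A| * ((MO_copula alpha (uT t A) - 1) / t)).
  apply/funext => t.
  under [RHS]eq_bigr do rewrite mulrA mulrBr mulr1 mulrBl.
  by rewrite sumrB -!mulr_suml (sum_sign0 R d0) mul0r subr0.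
have E : \sum_(A : {set 'I_d}) (-1) ^+ #|A| *
   (\sum_(j < d) (if j \in A then - ((1 - alpha j) * x j) else 0) +
    minI (fun j => if j \in A then - (alpha j * x j) else 0)) = minI (fun j => alpha j * x j).
  under eq_bigr do rewrite mulrDr.
  rewrite big_split /= sum_sign_lin // add0r sum_sign_minI // => j.
  by rewrite mulr_gt0.
rewrite -E.
apply: cvg_bigsum => A.
apply: cvgM; first exact: cvg_cst.
exact: quot_MO.
Qed.
End Asym.
Section Prob.
Variable R : realType.
Variable d : nat.
Variable alpha : 'I_d -> R.
Variable dT : measure_display.
Variable T : measurableType dT.
Variable P : probability T R.
Variable U : 'I_d -> T -> R.
Hypothesis ha : forall j, 0 < alpha j < 1.
Hypothesis hc : has_cdf P U (MO_copula alpha).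
Hypothesis d1 : (1 < d)%N.
Lemma d0 : (0 < d)%N. Proof. exact: leq_trans d1. Qed.

Definition pr (X : set T) : R := fine (P X).

Lemma finP X : measurable X -> P X \is a fin_num.
Proof. by move=> mX; apply: fin_num_measure. Qed.

Lemma prE X : measurable X -> P X = (pr X)%:E.
Proof. by move=> mX; rewrite /pr fineK // finP. Qed.

Lemma mpre j (B : set R) : measurable B -> measurable (U j @^-1` B).
Proof. by move=> mB; have := hc.1 j measurableT B mB; rewrite setTI. Qed.

Lemma m_le j c : measurable [set w | U j w <= c].
Proof.
rewrite (_ : [set w | U j w <= c] = U j @^-1` `]-oo, c]); first by apply: mpre; exact: measurable_itv.
by apply/seteqP; split => w /=; rewrite in_itv /=.
Qed.

Lemma m_ge j c : measurable [set w | c <= U j w].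
Proof.
rewrite (_ : [set w | c <= U j w] = U j @^-1` `[c, +oo[); first by apply: mpre; exact: measurable_itv.
by apply/seteqP; split => w /=; rewrite in_itv /= andbT.
Qed.

Lemma m_lt j c : measurable [set w | c < U j w].
Proof.
rewrite (_ : [set w | c < U j w] = U j @^-1` `]c, +oo[); first by apply: mpre; exact: measurable_itv.
by apply/seteqP; split => w /=; rewrite in_itv /= andbT.
Qed.

Lemma m_eq j c : measurable [set w | U j w = c].
Proof.
rewrite (_ : [set w | U j w = c] = U j @^-1` [set c]); first by apply: mpre; exact: measurable_set1.
by [].
Qed.

Lemma m_all (Q : 'I_d -> set T) : (forall j, measurable (Q j)) ->
  measurable [set w | forall j, Q j w].
Proof.
move=> mQ.
rewrite (_ : [set w | forall j, Q j w] = \bigcap_(j in [set: 'I_d]) Q j).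
  by apply: fin_bigcap_measurable => //; exact: finite_finset.
by apply/seteqP; split => w /= H j //; apply: H.
Qed.

Definition Eall : set T := [set w | forall j, U j w <= 1].

Lemma mEall : measurable Eall.
Proof. by apply: m_all => j; exact: m_le. Qed.

Section Thr.
Variable wv : 'I_d -> R.
Hypothesis hw : forall j, 0 <= wv j <= 1.

Definition ev (S Q : {set 'I_d}) : set T :=
  [set w | forall j, U j w <= 1 /\ (j \in S -> wv j < U j w) /\ (j \in Q -> U j w <= wv j)].

Lemma ev_meas (S Q : {set 'I_d}) : measurable (ev S Q).
Proof.
apply: (@m_all (fun j => [set w | U j w <= 1 /\ (j \in S -> wv j < U j w) /\ (j \in Q -> U j w <= wv j)])) => j.
rewrite (_ : [set w | U j w <= 1 /\ (j \in S -> wv j < U j w) /\ (j \in Q -> U j w <= wv j)] = [set w | U j w <= 1] `&`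
   ((if j \in S then [set w | wv j < U j w] else setT) `&`
    (if j \in Q then [set w | U j w <= wv j] else setT))).
  apply: measurableI; first exact: m_le.
  apply: measurableI; case: ifP => _ //; [exact: m_lt | exact: m_le].
apply/seteqP; split => w /=; case: (j \in S); case: (j \in Q) => /=.
- by move=> [H1 [H2 H3]]; split => //; split; [apply: H2|apply: H3].
- by move=> [H1 [H2 H3]]; split => //; split; [apply: H2|].
- by move=> [H1 [H2 H3]]; split => //; split; [|apply: H3].
- by move=> [H1 [H2 H3]]; split => //.
- by move=> [H1 [H2 H3]]; split => //; split => _.
- by move=> [H1 [H2 H3]]; split => //; split => // _.
- by move=> [H1 [H2 H3]]; split => //; split => // _.
- by move=> [H1 [H2 H3]]; split => //; split => // _.
Qed.

Lemma ev_split (S Q : {set 'I_d}) k : k \in S ->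
  ev (S :\ k) Q = ev S Q `|` ev (S :\ k) (k |: Q).
Proof.
move=> kS; apply/seteqP; split => w /=.
  move=> H; case: (leP (U k w) (wv k)) => Hk; [right|left] => j;
    have [H1 [H2 H3]] := H j; split => //; split => //.
    by rewrite !inE => /orP [/eqP -> //|]; exact: H3.
  case: (j =P k) => [-> //|/eqP jk] jS; apply: H2.
  by rewrite !inE jk.
move=> [H|H] j; have [H1 [H2 H3]] := H j; split => //; split => //.
  by move=> jS; apply: H2; move: jS; rewrite !inE => /andP [].
by move=> jQ; apply: H3; rewrite !inE jQ orbT.
Qed.

Lemma ev_disj (S Q : {set 'I_d}) k : k \in S -> ev S Q `&` ev (S :\ k) (k |: Q) = set0.
Proof.
move=> kS; apply/seteqP; split => w //= [H H'].
have := (H k).2.1 kS; have := (H' k).2.2; rewrite !inE eqxx /= => /(_ isT).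
by move=> a b; move: (le_lt_trans a b); rewrite ltxx.
Qed.

Lemma pr_split (S Q : {set 'I_d}) k : k \in S ->
  pr (ev S Q) = pr (ev (S :\ k) Q) - pr (ev (S :\ k) (k |: Q)).
Proof.
move=> kS; rewrite /pr (ev_split Q kS) measureU ?ev_disj //; try exact: ev_meas.
rewrite fineD ?addrK //; exact/finP/ev_meas.
Qed.

Lemma incl_excl n : forall S Q : {set 'I_d}, #|S| = n ->
  pr (ev S Q) = \sum_(A : {set 'I_d} | A \subset S) (-1) ^+ #|A| * pr (ev finset.set0 (A :|: Q)).
Proof.
elim: n => [|n IH] S Q cS.
  rewrite (finset.cards0_eq cS).
  rewrite (eq_bigl (pred1 finset.set0)); last by move=> A; rewrite finset.subset0.
  by rewrite big_pred1_eq finset.cards0 expr0 mul1r finset.set0U.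
have [k kS] : exists k, k \in S.
  by apply/finset.set0Pn; apply/eqP => S0; rewrite S0 finset.cards0 in cS.
have cS' : #|S :\ k| = n by move: cS; rewrite (finset.cardsD1 k) kS => -[].
rewrite (pr_split Q kS) (IH _ Q cS') (IH _ (k |: Q) cS') (sum_subset_split _ kS).
rewrite -sumrN; congr (_ + _); apply: eq_bigr => A.
rewrite finset.subsetD1 => /andP [_ kA].
rewrite finset.cardsU1 kA exprS mulN1r !mulNr; congr (- (_ * pr (ev _ _))).
by rewrite -finset.setUA finset.setUCA finset.setUA.
Qed.

Lemma ev0 (Q : {set 'I_d}) : pr (ev finset.set0 Q) = MO_copula alpha (fun j => if j \in Q then wv j else 1).
Proof.
rewrite /pr (_ : ev finset.set0 Q = [set w | forall j, U j w <= (if j \in Q then wv j else 1)]).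
  rewrite hc.2 // => j; case: (j \in Q); rewrite ?hw ?ler01 ?lexx //.
apply/seteqP; split => w /= H j.
  by have [H1 [_ H3]] := H j; case: (j \in Q) H3 => // /(_ isT).
have := H j; case jQ: (j \in Q) => Hj; rewrite ?inE; split => //.
  by apply: le_trans Hj _; case/andP: (hw j).
Qed.
End Thr.
Lemma MO_one : MO_copula alpha (fun=> 1) = 1.
Proof.
rewrite /MO_copula big1 ?mul1r => [|j _]; last by rewrite powR1.
apply: minI_unique; first exact: d0.
  by move=> j; rewrite powR1.
by exists (Ordinal d0); rewrite powR1.
Qed.

Lemma PE1 : P Eall = 1%E.
Proof.
have H : forall j : 'I_d, 0 <= (fun=> (1:R)) j <= 1 by move=> j; rewrite /= ler01 lexx.
by have := hc.2 _ H; rewrite MO_one.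
Qed.

Lemma PnotE : P (~` Eall) = 0%E.
Proof.
have H := measureU P mEall (measurableC mEall) (setICr Eall).
have H1 : P (Eall `|` ~` Eall) = 1%E by rewrite setUv; exact: probability_setT.
have H2 : 1%E = P Eall + P (~` Eall) by rewrite -H1; exact: H.
rewrite PE1 (prE (measurableC mEall)) -EFinD in H2.
case: H2 => H2; rewrite (prE (measurableC mEall)); congr (_%:E); lra.
Qed.

Lemma powR_le1 (v a : R) : 0 <= v <= 1 -> 0 <= a -> v `^ a <= 1.
Proof.
move=> /andP [v0 v1] a0.
have := @ge0_ler_powR R a a0 v 1; rewrite powR1 /=; apply => //.
by rewrite nnegrE ler01.
Qed.

Lemma MO_single j v : 0 <= v <= 1 ->
  MO_copula alpha (fun k => if k == j then v else 1) = v.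
Proof.
move=> hv; rewrite /MO_copula (bigD1 j) //= eqxx big1 => [|k kj]; last first.
  by rewrite (negbTE kj) powR1.
rewrite mulr1 (@minI_unique _ _ _ (v `^ alpha j)) //; first last.
- by exists j; rewrite eqxx.
- move=> k; case: (k =P j) => [->|_]; first by rewrite lexx.
  rewrite powR1 /=; apply: powR_le1 => //.
  by case/andP: (ha j) => /ltW.
- exact: d0.
rewrite -powRD; last by rewrite subrK oner_eq0.
rewrite subrK powRr1 //; by case/andP: hv.
Qed.

Lemma prle A B : measurable A -> measurable B -> A `<=` B -> pr A <= pr B.
Proof.
move=> mA mB AB.
have H : (P A <= P B)%E := le_measure P (mem_set mA) (mem_set mB) AB.
by rewrite (prE mA) (prE mB) lee_fin in H.
Qed.

Lemma prD A B : measurable A -> measurable B -> B `<=` A -> pr (A `\` B) = pr A - pr B.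
Proof.
move=> mA mB BA.
have H := measureU P (measurableD mA mB) mB (setDKI B A).
have H1 : P (A `\` B `|` B) = P A by rewrite setUC setDUK.
have H2 : P A = (P (A `\` B) + P B)%E by rewrite -H1; exact: H.
rewrite (prE mA) (prE mB) (prE (measurableD mA mB)) -EFinD in H2.
case: H2 => H2; lra.
Qed.

Lemma prU0 A B : measurable A -> measurable B -> P B = 0%E -> P (A `|` B) = P A.
Proof. move=> mA mB PB; apply: measureU0 => //. Qed.

Lemma PZ0 j c : 0 < c <= 1 -> P [set w | Eall w /\ U j w = c] = 0%E.
Proof.
move=> /andP [c0 c1].
pose Ev v := [set w | forall k, U k w <= (if k == j then v else 1)].
have mEv v : measurable (Ev v) by apply: m_all => k; exact: m_le.
have PEv v : 0 <= v <= 1 -> P (Ev v) = v%:E.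
  move=> hv; rewrite /Ev hc.2 ?MO_single // => k.
  by case: (k == j); rewrite // lexx ler01.
have mZ : measurable [set w | Eall w /\ U j w = c].
  exact: (measurableI _ _ mEall (m_eq j c)).
have key : forall e, 0 < e < c -> pr [set w | Eall w /\ U j w = c] <= e.
  move=> e /andP [e0 ec].
  have sub : [set w | Eall w /\ U j w = c] `<=` Ev c `\` Ev (c - e).
    move=> w [HE Hj]; split.
      by move=> k; case: (k =P j) => [->|_]; [rewrite Hj lexx | exact: HE].
    move/(_ j); rewrite eqxx Hj; lra.
  have := prle mZ (measurableD (mEv c) (mEv (c - e))) sub.
  rewrite prD ?mEv //; last first.
    move=> w Hw k; have := Hw k; case: (k == j) => // H; lra.
  rewrite /pr !PEv /=; first last.
  - by apply/andP; split; lra.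
  - by apply/andP; split; lra.
  lra.
have p0 : 0 <= pr [set w | Eall w /\ U j w = c].
  by rewrite /pr fine_ge0 // measure_ge0.
rewrite (prE mZ); congr (_%:E).
apply/eqP; rewrite eq_le p0 andbT; apply/negP => /negP; rewrite -ltNge => pp.
have := key (Num.min (pr [set w | Eall w /\ U j w = c]) c / 2).
have hm1 : Num.min (pr [set w | Eall w /\ U j w = c]) c <= pr [set w | Eall w /\ U j w = c] by rewrite ge_min lexx.
have hm2 : Num.min (pr [set w | Eall w /\ U j w = c]) c <= c by rewrite ge_min lexx orbT.
have hm0 : 0 < Num.min (pr [set w | Eall w /\ U j w = c]) c by rewrite lt_min pp c0.
move: hm1 hm2 hm0; set m := Num.min _ _; set q := pr _ => hm1 hm2 hm0.
have H : 0 < m / 2 < c by apply/andP; split; lra.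
move=> /(_ H); lra.
Qed.
Lemma null_ex (r : seq 'I_d) (Z : 'I_d -> set T) : (forall j, measurable (Z j)) ->
  (forall j, P (Z j) = 0%E) ->
  measurable [set w | exists2 j, j \in r & Z j w] /\
  P [set w | exists2 j, j \in r & Z j w] = 0%E.
Proof.
move=> mZ PZ; elim: r => [|i r [IHm IHp]].
  have -> : [set w | exists2 j, j \in [::] & Z j w] = set0.
    by apply/seteqP; split => w //= [].
  by split; [exact: measurable0 | exact: measure0].
have -> : [set w | exists2 j, j \in i :: r & Z j w] = Z i `|` [set w | exists2 j, j \in r & Z j w].
  apply/seteqP; split => w /=.
    move=> [j]; rewrite inE => /orP [/eqP -> | jr] Zj; [by left | by right; exists j].
  move=> [Zi|[j jr Zj]]; first by exists i; rewrite ?mem_head.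
  by exists j; rewrite // inE jr orbT.
split; first exact: measurableU.
by rewrite prU0.
Qed.

Lemma Chat_formula (x : 'I_d -> R) (t : R) : (forall j, 0 < x j) -> 0 < t ->
  (forall j, t * x j < 1) ->
  survival_cdf P U (fun j => t * x j) =
  \sum_(A : {set 'I_d}) (-1) ^+ #|A| * MO_copula alpha (uT x t A).
Proof.
move=> x0 t0 tx1.
pose wv := fun j => 1 - t * x j.
have hw : forall j, 0 <= wv j <= 1.
  move=> j; have := tx1 j; have : 0 < t * x j by rewrite mulr_gt0.
  rewrite /wv => ? ?; apply/andP; split; lra.
pose X := [set w | forall j, 1 - U j w <= t * x j].
have mX : measurable X.
  rewrite (_ : X = [set w | forall j, wv j <= U j w]).
    by apply: m_all => j; exact: m_ge.
  by apply/seteqP; split => w /= H j; have := H j; rewrite /wv; lra.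
pose Y := ev wv [set: 'I_d]%SET finset.set0.
have mY : measurable Y by exact: ev_meas.
pose Z := fun j => [set w | Eall w /\ U j w = wv j].
have mZ : forall j, measurable (Z j) by move=> j; exact: (measurableI _ _ mEall (m_eq j (wv j))).
have PZ : forall j, P (Z j) = 0%E.
  move=> j; apply: PZ0; have := tx1 j; have : 0 < t * x j by rewrite mulr_gt0.
  rewrite /wv => ? ?; apply/andP; split; lra.
have [mN2 PN2] := null_ex (enum 'I_d) mZ PZ.
set N2 := [set w | exists2 j, j \in enum 'I_d & Z j w] in mN2 PN2.
have mN : measurable (~` Eall `|` N2) by apply: measurableU => //; exact: measurableC mEall.
have PN : P (~` Eall `|` N2) = 0%E by rewrite prU0 // ?PnotE //; exact: measurableC mEall.
have XY : pr X = pr Y.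
  apply/eqP; rewrite eq_le; apply/andP; split.
    have -> : pr Y = pr (Y `|` (~` Eall `|` N2)).
      by rewrite /pr prU0.
    apply: prle => //; first exact: measurableU.
    move=> w Xw; case: (pselect (Eall w)) => HE; last by right; left.
    case: (pselect (exists j, U j w = wv j)) => [[j Hj]|Hn].
      by right; right; exists j; [rewrite mem_enum | split].
    left => j; split; first exact: HE.
    split; last by rewrite inE.
    move=> _; rewrite lt_neqAle; apply/andP; split.
      by apply/eqP => E; apply: Hn; exists j.
    by have := Xw j; rewrite /wv; lra.
  apply: prle => // w Yw j; have [_ [H _]] := Yw j.
  by have := H (finset.in_setT j); rewrite /wv; lra.
rewrite /survival_cdf -/X -/(pr X) XY /Y (@incl_excl wv _ _ _ (erefl _)) sum_allT.
apply: eq_bigr => A _; rewrite finset.setU0 ev0 //.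
Qed.

Lemma tail_cvg (x : 'I_d -> R) : (forall j, 0 < x j) ->
  (fun t => survival_cdf P U (fun j => t * x j) / t) @ (0:R)^'+ -->
  minI (fun j => alpha j * x j).
Proof.
move=> x0.
have a0 : forall j, 0 < alpha j by move=> j; case/andP: (ha j).
pose e := minI (fun j => (x j)^-1).
have e0 : 0 < e.
  by rewrite /e; have [j ->] := minI_attained (fun j => (x j)^-1) d0; rewrite invr_gt0.
apply: cvg_trans; last exact: (quot_sum d1 a0 x0).
apply: near_eq_cvg; near=> t.
have t0 : 0 < t by near: t; exact: nbhs_right_gt.
have te : t < e by near: t; exact: nbhs_right_lt.
rewrite Chat_formula // => j.
have : t < (x j)^-1 by apply: lt_le_trans te (minI_le _ j).
by rewrite -(ltr_pM2r (x0 j)) mulVf ?gt_eqF.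
Unshelve. all: by end_near.
Qed.
End Prob.

Unset Implicit Arguments.

Theorem proposition3p2 (R : realType) (d : nat) (alpha : 'I_d -> R)
  (dT : measure_display) (T : measurableType dT) (P : probability T R)
  (U : 'I_d -> T -> R) :
  (2 <= d)%N ->
  (forall j, 0 < alpha j < 1) ->
  has_cdf P U (MO_copula alpha) ->
  let Chat := survival_cdf P U in
  let g := \prod_(j < d) (alpha j `^ (d%:R^-1)) in
  let bstar := fun j => g / alpha j in
  [/\ has_tail_copula Chat (fun x => minI (fun j => alpha j * x j)),
      lambda_star Chat = g,
      bstar \in (@Bset R d) &
      forall b, b \in (@Bset R d) ->
        ((forall b', b' \in (@Bset R d) -> tail_copula Chat b' <= tail_copula Chat b)
         <-> b = bstar)].
Proof.
move=> d2 ha hc Chat g bstar.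
have d0 : (0 < d)%N by apply: leq_trans d2.
have a0 : forall j, 0 < alpha j by move=> j; case/andP: (ha j).
have tail : has_tail_copula Chat (fun x => minI (fun j => alpha j * x j)).
  by move=> x hx; exact: (tail_cvg ha hc d2 hx).
have tcE : forall b, (forall j, 0 < b j) -> tail_copula Chat b = minI (fun j => alpha j * b j).
  by move=> b hb; apply: cvg_lim => //; exact: tail.
have g0 : 0 < g by apply: prodr_gt0 => j _; exact: powR_gt0.
have gd : g ^+ d = \prod_(j < d) alpha j.
  rewrite /g -prodrXl; apply: eq_bigr => j _.
  rewrite -powR_mulrn ?powR_ge0 // -powRrM mulVf ?powRr1 ?pnatr_eq0 -?lt0n //.
  exact: ltW.
have gconst : \prod_(j < d) g = g ^+ d by rewrite prodr_const card_ord.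
have bsB : bstar \in (@Bset R d).
  apply/mem_set; split; first by move=> j; rewrite divr_gt0.
  rewrite /bstar big_split /= gconst gd prodfV divff //.
  by apply/prodf_neq0 => j _; rewrite gt_eqF.
have Lbs : tail_copula Chat bstar = g.
  rewrite tcE; last by move=> j; rewrite divr_gt0.
  apply: minI_unique => //; last by exists (Ordinal d0); rewrite /bstar mulrC divfK ?gt_eqF.
  by move=> j; rewrite /bstar mulrC divfK ?gt_eqF.
have Bpos : forall b, b \in (@Bset R d) -> forall j, 0 < b j by move=> b /set_mem [].
have Bprod : forall b, b \in (@Bset R d) -> \prod_(j < d) (alpha j * b j) = g ^+ d.
  by move=> b /set_mem [_ pb]; rewrite big_split /= pb mulr1 gd.
have mpos : forall b, b \in (@Bset R d) -> 0 < minI (fun j => alpha j * b j).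
  move=> b bB; have [j ->] := minI_attained (fun j => alpha j * b j) d0.
  by rewrite mulr_gt0 // Bpos.
have Lle : forall b, b \in (@Bset R d) -> tail_copula Chat b <= g.
  move=> b bB; rewrite tcE; last exact: Bpos.
  have m0 := mpos b bB.
  rewrite -(@ler_pXn2r _ d d0) ?nnegrE ?(ltW m0) ?(ltW g0) // -(Bprod b bB).
  rewrite (_ : minI _ ^+ d = \prod_(j < d) minI (fun j => alpha j * b j)); last by rewrite prodr_const card_ord.
  apply: ler_prod => j _; rewrite (ltW m0) /=; exact: minI_le.
split; [exact: tail| |exact: bsB|].
- rewrite /lambda_star; apply/eqP; rewrite eq_le; apply/andP; split.
    apply: ge_sup; first by exists g, bstar => //; exact/set_mem.
    by move=> _ [b bB <-]; apply: Lle; exact/mem_set.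
  apply: ub_le_sup; last by exists bstar => //; exact/set_mem.
  by exists g => _ [b bB <-]; apply: Lle; exact/mem_set.
- move=> b bB; split; last first.
  by move=> -> b' b'B; rewrite Lbs; exact: Lle.
move=> Hmax.
have mg : g <= minI (fun j => alpha j * b j) by rewrite -tcE; [rewrite -Lbs; exact: Hmax | exact: Bpos].
have eqj : forall j, alpha j * b j = g.
  move=> j; apply/eqP; rewrite eq_le (le_trans mg (minI_le _ j)) andbT.
  rewrite leNgt; apply/negP => Hj.
  have : g ^+ d < \prod_(k < d) (alpha k * b k).
    have H1 : \prod_(k < d | k != j) g <= \prod_(k < d | k != j) (alpha k * b k).
      apply: ler_prod => k _; rewrite (ltW g0) /=; exact: le_trans mg (minI_le _ k).
    have H2 : 0 < \prod_(k < d | k != j) g by apply: prodr_gt0.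
    rewrite -gconst (bigD1 j) //= [X in _ < X](bigD1 j) //=.
    apply: (@lt_le_trans _ _ (alpha j * b j * \prod_(k < d | k != j) g)).
      by rewrite ltr_pM2r.
    by rewrite ler_pM2l ?mulr_gt0 ?a0 ?Bpos.
  by rewrite Bprod // ltxx.
apply/funext => j; by rewrite /bstar -(eqj j) mulrAC divff ?gt_eqF // mul1r.
Qed.
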